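(* Let $a,b\geq 2$ be integers. For any integers $m\geq a+3$ and $n\geq b+3$ there exist regular erasure patterns $\mathcal{E}\subseteq[m]\times[n]$ that are not correctable in the topology $T_{m\times n}(a,b,0)$.
   Context: Positions of vectors in $\mathbb{F}^{mn}$ are identified with $[m]\times[n]$, $[k]=\{1,\dots,k\}$. For linear codes $\mathcal{C}_1\subseteq\mathbb{F}^m,\mathcal{C}_2\subseteq\mathbb{F}^n$, $\mathcal{C}_1\otimes\mathcal{C}_2$ is the row span of the Kronecker product of their generator matrices. A code for the topology $T_{m\times n}(a,b,0)$ is a linear code over a finite field $\mathbb{F}$ whose parity-check matrix is a parity-check matrix of $\mathcal{C}_{\mathsf{col}}\otimes\mathcal{C}_{\mathsf{row}}$, where $\mathcal{C}_{\mathsf{col}}$ is a linear $[m,\geq m-a]$ code and $\mathcal{C}_{\mathsf{row}}$ a linear $[n,\geq n-b]$ code over $\mathbb{F}$; $\mathbb{C}_{m\times n}(a,b,0)$ is the set of these codes (over any finite field). A code corrects an erasure pattern $\mathcal{E}$ if no two distinct codewords agree on all positions outside $\mathcal{E}$; $\mathcal{E}$ is correctable in $T_{m\times n}(a,b,0)$ if some code in $\mathbb{C}_{m\times n}(a,b,0)$ corrects it. An erasure pattern $\mathcal{E}\subseteq[m]\times[n]$ is regular (for $T_{m\times n}(a,b,0)$) if for all $\mathcal{U}\subseteq[m]$ with $|\mathcal{U}|=u\geq a$ and all $\mathcal{V}\subseteq[n]$ with $|\mathcal{V}|=v\geq b$ one has $|\mathcal{E}\cap(\mathcal{U}\times\mathcal{V})|\leq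 va+ub-ab$. *)

(* Defs.v *)
From mathcomp Require Import all_boot all_order all_algebra.
From mathcomp Require Import mxtens.
Set Implicit Arguments. Unset Strict Implicit. Unset Printing Implicit Defensive.
Import GRing.Theory.
Local Open Scope ring_scope.

(* Positions of vectors in F^(m*n) are identified with 'I_m * 'I_n via
   mxtens_index (i, j) = i * n + j, the indexing used by the Kronecker
   product tensmx (A *t B). *)

(* The product code C_col (x) C_row: the row span of the Kronecker product
   of generator matrices G1 : 'M_(k1, m), G2 : 'M_(k2, n). A vector
   c : 'rV_(m*n) is a codeword iff (c <= G1 *t G2)%MS. *)
Definition tensor_gen (F : fieldType) (k1 m k2 n : nat)
  (G1 : 'M[F]_(k1, m)) (G2 : 'M[F]_(k2, n)) : 'M[F]_(k1 * k2, m * n) :=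
  tensmx G1 G2.

Definition corrects (F : fieldType) (k m n : nat) (G : 'M[F]_(k, m * n))
  (E : {set 'I_m * 'I_n}) : Prop :=
  forall c1 c2 : 'rV[F]_(m * n),
    (c1 <= G)%MS -> (c2 <= G)%MS ->
    (forall (i : 'I_m) (j : 'I_n), (i, j) \notin E ->
        c1 0 (mxtens_index (i, j)) = c2 0 (mxtens_index (i, j))) ->
    c1 = c2.

(* E is correctable in T_{m x n}(a,b,0): some finite field F and some
   C_col = rowspace G1 (an [m, >= m-a] code) and C_row = rowspace G2
   (an [n, >= n-b] code) are such that C_col (x) C_row corrects E. *)
Definition correctable (m n a b : nat) (E : {set 'I_m * 'I_n}) : Prop :=
  exists (F : finFieldType) (k1 k2 : nat)
         (G1 : 'M[F]_(k1, m)) (G2 : 'M[F]_(k2, n)),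
    [/\ (m - a <= \rank G1)%N, (n - b <= \rank G2)%N
      & corrects (tensor_gen G1 G2) E].

Definition regular (m n a b : nat) (E : {set 'I_m * 'I_n}) : Prop :=
  forall (U : {set 'I_m}) (V : {set 'I_n}),
    (a <= #|U|)%N -> (b <= #|V|)%N ->
    (#|E :&: setX U V| <= #|V| * a + #|U| * b - a * b)%N.

(* Main.v *)
Require Import Defs.
From mathcomp Require Import all_boot all_order all_algebra mxtens.
From mathcomp Require Import zify ring.
Set Implicit Arguments. Unset Strict Implicit. Unset Printing Implicit Defensive.
Import GRing.Theory.

Definition base (i j : nat) : bool :=
  [|| (i < 2) && (j < 3), (3 <= i) && (2 <= j) | (i == 2) && (j != 2)].
Definition inEr (a b i j : nat) : bool :=
  [|| (5 <= i) && (i < a + 3), (5 <= j) && (j < b + 3) |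
      [&& i < 5, j < 5 & base i j]].
Definition Eset (a b m n : nat) : {set 'I_m * 'I_n} :=
  [set p : 'I_m * 'I_n | inEr a b p.1 p.2].
Definition ordm (m : nat) (H : 0 < m) (k : nat) : 'I_m := Ordinal (ltn_pmod k H).

Lemma ordmE m (H : 0 < m) k : k < m -> val (ordm H k) = k.
Proof. by move=> Hk; rewrite /= modn_small. Qed.


Definition P5 : {set 'I_5 * 'I_5} := [set p : 'I_5 * 'I_5 | base p.1 p.2].

Lemma card_sumb (T : finType) (A : {set T}) : #|A| = \sum_(i : T) (i \in A : nat).
Proof. by rewrite -sum1_card big_mkcond /=; apply: eq_bigr => i _; case: (i \in A). Qed.

Lemma check5 (U5 V5 : {set 'I_5}) :
  #|setX U5 V5 :&: P5| <= 2 * maxn #|V5| 2 + 2 * maxn #|U5| 2 - 4.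
Proof.
have -> : #|setX U5 V5 :&: P5| =
   \sum_(i : 'I_5) \sum_(j : 'I_5) (((i \in U5) && (j \in V5) && base i j) : nat).
  rewrite card_sumb pair_bigA; apply: eq_bigr; case=> i j _; by rewrite !inE.
rewrite !card_sumb !big_ord_recl !big_ord0.
repeat match goal with |- context [in_mem ?x ?M] => case: (in_mem x M) end;
  vm_compute; reflexivity.
Qed.

Lemma arith a b k l w x e : 2 <= a -> 2 <= b -> k <= a - 2 -> l <= b - 2 ->
  a <= k + w -> b <= l + x -> e <= 2 * x + 2 * w - 4 ->
  k * (l + x) + w * l + e <= (l + x) * a + (k + w) * b - a * b.
Proof.
move=> Ha Hb Hk Hl Hw Hx He.
have [s Hs] : exists s, a = k + 2 + s by exists (a - k - 2); lia.
have [t Ht] : exists t, b = l + 2 + t by exists (b - l - 2); lia.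
have [p Hp] : exists p, w = 2 + s + p by exists (w - 2 - s); lia.
have [q Hq] : exists q, x = 2 + t + q by exists (x - 2 - t); lia.
have H1 : 2 * x + 2 * w - 4 = 4 + 2 * t + 2 * q + 2 * s + 2 * p by lia.
rewrite H1 in He.
have key : (l + x) * a + (k + w) * b = a * b + (k * (l + x) + w * l + (4 + 2 * t + 2 * q + 2 * s + 2 * p)) + (s * t + s * q + t * p).
  subst a b w x. ring.
rewrite key. lia.
Qed.

Lemma card_band m c (t : nat) (Hm : 0 < m) : t + c <= m ->
  #|[set i : 'I_m | (t <= i) && (i < t + c)]| <= c.
Proof.
move=> Htc.
have Hs : [set i : 'I_m | (t <= i) && (i < t + c)] \subset
          [set ordm Hm (t + val j) | j : 'I_c].
  apply/subsetP => i; rewrite inE => /andP [H1 H2].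
  have Hj : i - t < c by lia.
  apply/imsetP; exists (Ordinal Hj) => //.
  apply: val_inj; rewrite ordmE /=; lia.
apply: leq_trans (subset_leq_card Hs) _.
by apply: leq_trans (leq_imset_card _ _) _; rewrite card_ord.
Qed.

Lemma reg a b m n : 2 <= a -> 2 <= b -> a + 3 <= m -> b + 3 <= n ->
  regular a b (Eset a b m n).
Proof.
move=> Ha Hb Hm Hn U V HU HV.
have H5m : 5 <= m by lia.
have H5n : 5 <= n by lia.
have Hm0 : 0 < m by lia.
have Hn0 : 0 < n by lia.
pose N := [set i : 'I_m | (5 <= i) && (i < 5 + (a - 2))].
pose Mc := [set j : 'I_n | (5 <= j) && (j < 5 + (b - 2))].
have HU' : a <= #|U :&: N| + #|U :\: N| by rewrite cardsID.
have HV' : b <= #|V :&: Mc| + #|V :\: Mc| by rewrite cardsID.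
rewrite -(cardsID N U) -(cardsID Mc V).
pose emb1 (k : 'I_5) : 'I_m := widen_ord H5m k.
pose emb2 (k : 'I_5) : 'I_n := widen_ord H5n k.
pose U5 := [set k : 'I_5 | emb1 k \in U].
pose V5 := [set k : 'I_5 | emb2 k \in V].
pose Q := [set (emb1 p.1, emb2 p.2) | p in setX U5 V5 :&: P5].
have Hsub : Eset a b m n :&: setX U V \subset
   (setX (U :&: N) V :|: setX (U :\: N) (V :&: Mc)) :|: Q.
  apply/subsetP => [[i j]]; rewrite !inE /= => /andP [HE /andP [Hi Hj]].
  rewrite /inEr in HE.
  case HiN: ((5 <= i) && (i < 5 + (a - 2))); first by rewrite Hi Hj.
  case HjM: ((5 <= j) && (j < 5 + (b - 2))); first by rewrite Hi Hj orbT.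
  have Hi5 : i < 5 by lia.
  have Hj5 : j < 5 by lia.
  have Hb5 : base i j by move: HE; rewrite /base; lia.
  apply/orP; right; apply/imsetP; exists (Ordinal Hi5, Ordinal Hj5).
    rewrite !inE /=.
    have -> : emb1 (Ordinal Hi5) = i by apply: val_inj.
    have -> : emb2 (Ordinal Hj5) = j by apply: val_inj.
    by rewrite Hi Hj.
  by congr pair; apply: val_inj.
have Hc := subset_leq_card Hsub.
have HQ : #|Q| <= #|setX U5 V5 :&: P5| by apply: leq_imset_card.
have Hch := check5 U5 V5.
have HN : #|U :&: N| <= a - 2.
  apply: leq_trans (subset_leq_card (subsetIr U N)) _.
  by apply: card_band; lia.
have HMc : #|V :&: Mc| <= b - 2.
  apply: leq_trans (subset_leq_card (subsetIr V Mc)) _.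
  by apply: card_band; lia.
have HU5 : #|U5| <= #|U :\: N|.
  have inj1 : injective emb1 by move=> x y /(congr1 val) /= /val_inj.
  rewrite -(card_imset _ inj1); apply: subset_leq_card.
  apply/subsetP => i /imsetP [k]; rewrite inE => Hk ->.
  rewrite !inE Hk andbT; apply/negP; rewrite /= => /andP [H1 _].
  by move: (ltn_ord k); lia.
have HV5 : #|V5| <= #|V :\: Mc|.
  have inj2 : injective emb2 by move=> x y /(congr1 val) /= /val_inj.
  rewrite -(card_imset _ inj2); apply: subset_leq_card.
  apply/subsetP => i /imsetP [k]; rewrite inE => Hk ->.
  rewrite !inE Hk andbT; apply/negP; rewrite /= => /andP [H1 _].
  by move: (ltn_ord k); lia.
have HU3 := cardsU (setX (U :&: N) V :|: setX (U :\: N) (V :&: Mc)) Q.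
have HU4 := cardsU (setX (U :&: N) V) (setX (U :\: N) (V :&: Mc)).
rewrite !cardsX -(cardsID Mc V) in HU3 HU4.
apply: leq_trans Hc _.
set k := #|U :&: N| in HN HU' HU3 HU4 *.
set w := #|U :\: N| in HU5 HU' HU3 HU4 *.
set l := #|V :&: Mc| in HMc HV' HU3 HU4 *.
set x := #|V :\: Mc| in HV5 HV' HU3 HU4 *.
clearbody k w l x.
have He : #|setX U5 V5 :&: P5| <= 2 * x + 2 * w - 4.
  apply: leq_trans Hch _.
  have h1 : maxn #|V5| 2 <= x by rewrite geq_max HV5 /=; lia.
  have h2 : maxn #|U5| 2 <= w by rewrite geq_max HU5 /=; lia.
  by apply: leq_sub2r; apply: leq_add; rewrite leq_mul2l /= ?h1 ?h2.
have Har := arith Ha Hb HN HMc HU' HV' He.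
apply: leq_trans Har; rewrite HU3 HU4.
apply: leq_trans (leq_subr _ _) _; exact: leq_add (leq_subr _ _) HQ.
Qed.

Local Open Scope ring_scope.

Lemma ex_vec (F : fieldType) k m (G : 'M[F]_(k,m)) c (f : 'I_c -> 'I_m) :
  (c < \rank G)%N ->
  exists x : 'rV[F]_m, [/\ x != 0, (x <= G)%MS & forall j, x 0 (f j) = 0].
Proof.
move=> Hc.
pose P := \matrix_(i < m, j < c) (i == f j)%:R : 'M[F]_(m, c).
pose K := kermx P.
have HK : \rank K = (m - \rank P)%N by rewrite mxrank_ker.
have HP : (\rank P <= c)%N by apply: rank_leq_col.
have Hs := mxrank_sum_cap G K.
have Hsum : (\rank (G + K)%MS <= m)%N by apply: rank_leq_col.
have HG : (\rank G <= m)%N by apply: rank_leq_col.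
have Hpos : (0 < \rank (G :&: K)%MS)%N by lia.
have Hnz : (G :&: K)%MS != 0 by rewrite -mxrank_eq0 -lt0n.
have [i Hi] : exists i, row i (G :&: K)%MS != 0.
  apply/existsP; apply: contraR Hnz; rewrite negb_exists => /forallP H.
  by apply/eqP/row_matrixP => i; rewrite row0; apply/eqP; move: (H i); rewrite negbK.
exists (row i (G :&: K)%MS); split => //.
  exact: submx_trans (row_sub _ _) (capmxSl _ _).
move=> j.
have : (row i (G :&: K)%MS <= K)%MS by exact: submx_trans (row_sub _ _) (capmxSr _ _).
move/sub_kermxP => /matrixP /(_ 0 j).
rewrite !mxE (bigD1 (f j)) //= big1 => [|l /negPf Hl]; last by rewrite !mxE Hl mulr0.
by rewrite !mxE eqxx mulr1 addr0.
Qed.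

Lemma ex_vec_pts (F : fieldType) k m (G : 'M[F]_(k,m)) (Hm : (0 < m)%N) p q t :
  (p < m)%N -> (q < m)%N -> (t <= m)%N -> (m - t + 2 < \rank G)%N ->
  exists x : 'rV[F]_m, [/\ x != 0, (x <= G)%MS &
    forall i : 'I_m, [|| (i : nat) == p, (i : nat) == q | (t <= i)%N] -> x 0 i = 0].
Proof.
move=> Hp Hq Ht HG.
pose f := fun j : 'I_(m - t + 2) =>
  ordm Hm (if val j == 0%N then p else if val j == 1%N then q else (t + val j - 2)%N).
have [x [H1 H2 H3]] := ex_vec f HG.
exists x; split => // i Hi.
have [j Hj] : exists j, f j = i.
  case/or3P: Hi => Hi.
  - have Hj : (0 < m - t + 2)%N by lia.
    exists (Ordinal Hj); apply: val_inj; rewrite /f /= modn_small //; lia.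
  - have Hj : (1 < m - t + 2)%N by lia.
    exists (Ordinal Hj); apply: val_inj; rewrite /f /= modn_small //; lia.
  - have Hj : (i - t + 2 < m - t + 2)%N by move: (ltn_ord i); lia.
    exists (Ordinal Hj); apply: val_inj; rewrite /f /=.
    have -> : (i - t + 2 == 0)%N = false by lia.
    have -> : (i - t + 2 == 1)%N = false by lia.
    rewrite modn_small; move: (ltn_ord i); lia.
by rewrite -Hj H3.
Qed.

Lemma row_nz (F : fieldType) m (v : 'rV[F]_m) : v != 0 -> exists i, v 0 i != 0.
Proof.
move=> Hv; apply/existsP; apply: contraR Hv; rewrite negb_exists => /forallP H.
apply/eqP/matrixP => i j; rewrite ord1 mxE; exact/eqP/negPn/H.
Qed.

Definition tv (F : fieldType) m n (x : 'rV[F]_m) (y : 'rV[F]_n) : 'rV[F]_(m * n) :=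
  x *t y.

Lemma tvE (F : fieldType) m n (x : 'rV[F]_m) (y : 'rV[F]_n) i j :
  tv x y 0 (mxtens_index (i, j)) = x 0 i * y 0 j.
Proof.
have e : (0 : 'I_1) = mxtens_index ((0 : 'I_1), (0 : 'I_1)) by apply: val_inj.
rewrite /tv {1}e; exact: tensmxE.
Qed.

Lemma tv_sub (F : fieldType) k1 k2 m n (G1 : 'M[F]_(k1, m)) (G2 : 'M[F]_(k2, n))
  (x : 'rV[F]_m) (y : 'rV[F]_n) :
  (x <= G1)%MS -> (y <= G2)%MS -> (tv x y <= tensor_gen G1 G2)%MS.
Proof.
case/submxP => u ->; case/submxP => w ->.
rewrite /tv /tensor_gen -tensmx_mul; exact: submxMl.
Qed.

Lemma lin_entry (F : fieldType) N (A B : 'rV[F]_N) (c d : F) k :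
  (c *: A + d *: B) 0 k = c * A 0 k + d * B 0 k.
Proof. by rewrite !mxE. Qed.

Lemma supp1 a b i j : ~~ inEr a b i j -> ~~ ((i == 2) && (j == 2))%N ->
   [|| i == 3, i == 4 | a + 3 <= i]%N || [|| j == 3, j == 4 | b + 3 <= j]%N.
Proof. rewrite /inEr /base. lia. Qed.

Lemma supp2 a b i j : ~~ inEr a b i j -> ~~ ((i == 2) && (j == 2))%N ->
   [|| i == 0, i == 1 | a + 3 <= i]%N || [|| j == 0, j == 1 | b + 3 <= j]%N.
Proof. rewrite /inEr /base. lia. Qed.

Lemma suppA a b i j : ~~ inEr a b i j ->
   [|| i == 2, i == 2 | a + 3 <= i]%N || [|| j == 0, j == 1, j == 3, j == 4 | b + 3 <= j]%N.
Proof. rewrite /inEr /base. lia. Qed.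

Lemma noncorr a b m n : (2 <= a)%N -> (2 <= b)%N -> (a + 3 <= m)%N -> (b + 3 <= n)%N ->
  ~ correctable a b (Eset a b m n).
Proof.
move=> Ha Hb Hm Hn [F [k1 [k2 [G1 [G2 [r1 r2 Hc]]]]]].
have Hm0 : (0 < m)%N by lia.
have Hn0 : (0 < n)%N by lia.
suff [c [Hc0 Hcs Hz]] : exists c : 'rV[F]_(m * n), [/\ c != 0,
    (c <= tensor_gen G1 G2)%MS &
    forall (i : 'I_m) (j : 'I_n), ~~ inEr a b i j -> c 0 (mxtens_index (i, j)) = 0].
  move/eqP: Hc0; apply; apply: Hc => //; first exact: sub0mx.
  by move=> i j; rewrite inE /= => /Hz ->; rewrite mxE.
have [y' [Hy'0 Hy'G Hy'z]] := ex_vec_pts (G := G2) Hn0 (p := 0) (q := 1) (t := b + 3)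
   ltac:(lia) ltac:(lia) Hn ltac:(lia).
case Hy34: ((y' 0 (ordm Hn0 3) == 0) && (y' 0 (ordm Hn0 4) == 0)).
  have [z [Hz0 HzG Hzz]] := ex_vec_pts (G := G1) Hm0 (p := 2) (q := 2) (t := a + 3)
     ltac:(lia) ltac:(lia) Hm ltac:(lia).
  exists (tv z y'); split.
  - have [i0 Hi0] := row_nz Hz0; have [j0 Hj0] := row_nz Hy'0.
    apply/eqP => /matrixP /(_ 0 (mxtens_index (i0, j0))); rewrite tvE mxE.
    by apply/eqP; rewrite mulf_neq0.
  - exact: tv_sub.
  move=> i j Hij; rewrite tvE.
  case/andP: Hy34 => /eqP H3 /eqP H4.
  case/orP: (suppA Hij) => H.
    by rewrite Hzz ?mul0r.
  have [Hj|Hj] : ((j == 3 :> nat) || (j == 4 :> nat)) \/ [|| j == 0 :> nat, j == 1 :> nat | (b + 3 <= j)%N].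
    lia.
    case/orP: Hj => /eqP Hj.
      have -> : j = ordm Hn0 3 by apply: val_inj; rewrite ordmE //; lia.
      by rewrite H3 mulr0.
    have -> : j = ordm Hn0 4 by apply: val_inj; rewrite ordmE //; lia.
    by rewrite H4 mulr0.
  by rewrite Hy'z ?mulr0.
have [x [Hx0 HxG Hxz]] := ex_vec_pts (G := G1) Hm0 (p := 3) (q := 4) (t := a + 3)
   ltac:(lia) ltac:(lia) Hm ltac:(lia).
have [y [Hy0 HyG Hyz]] := ex_vec_pts (G := G2) Hn0 (p := 3) (q := 4) (t := b + 3)
   ltac:(lia) ltac:(lia) Hn ltac:(lia).
have [x' [Hx'0 Hx'G Hx'z]] := ex_vec_pts (G := G1) Hm0 (p := 0) (q := 1) (t := a + 3)
   ltac:(lia) ltac:(lia) Hm ltac:(lia).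
have [j0 [Hj0a Hj0b]] : exists j0 : 'I_n, y' 0 j0 != 0 /\ ((j0 == 3 :> nat) || (j0 == 4 :> nat)).
  case H3: (y' 0 (ordm Hn0 3) == 0).
    exists (ordm Hn0 4); rewrite ordmE; last lia.
    by move: Hy34; rewrite H3 /= => ->.
  by exists (ordm Hn0 3); rewrite ordmE ?H3 //; lia.
pose i2 := ordm Hm0 2; pose j2 := ordm Hn0 2.
have Hi2 : forall i : 'I_m, (i == 2 :> nat) -> i = i2.
  by move=> i /eqP Hi; apply: val_inj; rewrite ordmE //; lia.
have Hj2 : forall j : 'I_n, (j == 2 :> nat) -> j = j2.
  by move=> j /eqP Hj; apply: val_inj; rewrite ordmE //; lia.
pose s := x 0 i2 * y 0 j2; pose s' := x' 0 i2 * y' 0 j2.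
case Hs: (s == 0).
  exists (tv x y); split.
  - have [i0 Hi0] := row_nz Hx0; have [j1 Hj1] := row_nz Hy0.
    apply/eqP => /matrixP /(_ 0 (mxtens_index (i0, j1))); rewrite tvE mxE.
    by apply/eqP; rewrite mulf_neq0.
  - exact: tv_sub.
  move=> i j Hij; rewrite tvE.
  case: (boolP (((i : nat) == 2) && ((j : nat) == 2))%N) => H22.
    case/andP: H22 => /Hi2 -> /Hj2 ->; exact/eqP.
  case/orP: (supp1 Hij H22) => H.
    by rewrite Hxz ?mul0r.
  by rewrite Hyz ?mulr0.
exists (s' *: tv x y + (- s) *: tv x' y'); split.
- have [i0 Hi0] := row_nz Hx'0.
  apply/eqP => /matrixP /(_ 0 (mxtens_index (i0, j0))).
  rewrite lin_entry !tvE (Hyz j0); last by case/orP: Hj0b => ->; rewrite ?orbT.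
  rewrite mulr0 mulr0 add0r mxE mulNr => /eqP; apply/negP; rewrite oppr_eq0 (mulf_neq0 (negbT Hs)) // mulf_neq0 //.
- by apply: addmx_sub; apply: scalemx_sub; apply: tv_sub.
move=> i j Hij; rewrite lin_entry !tvE.
case: (boolP (((i : nat) == 2) && ((j : nat) == 2))%N) => H22.
  case/andP: H22 => /Hi2 -> /Hj2 ->; rewrite /s /s'.
  ring.
have H1 : x 0 i * y 0 j = 0.
  case/orP: (supp1 Hij H22) => H.
    by rewrite Hxz ?mul0r.
  by rewrite Hyz ?mulr0.
have H2 : x' 0 i * y' 0 j = 0.
  case/orP: (supp2 Hij H22) => H.
    by rewrite Hx'z ?mul0r.
  by rewrite Hy'z ?mulr0.
by rewrite H1 H2 !mulr0 addr0.
Qed.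

Local Close Scope ring_scope.

Theorem theorem4 (a b : nat) :
  (2 <= a)%N -> (2 <= b)%N ->
  forall m n : nat, (a + 3 <= m)%N -> (b + 3 <= n)%N ->
  exists E : {set 'I_m * 'I_n}, regular a b E /\ ~ correctable a b E.
Proof.
move=> Ha Hb m n Hm Hn.
exists (Eset a b m n); split; [exact: reg | exact: noncorr].
Qed.
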